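(* Let $R$ be a commutative ring and $I$ a finite totally ordered set. Suppose given, for every subset $I'\subset I$, functions $a_{I'},b_{I'}:\mathcal{D}(I')\to R$ and $c_{I'},d_{I'}:\mathcal{P}_{ord}(I')\to R$ such that for all $P=(I_1,\dots,I_r)\in\mathcal{P}_{ord}(I')$ and $(J,K)\in\mathcal{D}(I')$ for which there exists $k\in\{1,\dots,r\}$ with $J=I_1\cup\dots\cup I_k$, one has $c_{I'}(P)=a_{I'}(J,K)c_J(P\cap J)c_K(P\cap K)$ and $d_{I'}(P)=b_{I'}(J,K)d_J(P\cap J)d_K(P\cap K)$. Let $\lambda=(\lambda_i)_{i\in I}\in\mathbb{R}^I$ and $(I^+,I^-)\in\mathcal{D}(I)$, and let $\lambda^\pm=(\lambda_i)_{i\in I^\pm}$. Then \[\sum_{P\in\mathcal{P}_{ord}(\lambda)}(-1)^{|P|}c_{I^+}(P\cap I^+)d_{I^-}(P\cap I^-)=\sum_{P^+\in\mathcal{P}_{ord}(\lambda^+)}(-1)^{|P^+|}c_{I^+}(P^+)\sum_{P^-\in\mathcal{P}_{ord}(\lambda^-)}(-1)^{|P^-|}d_{I^-}(P^-).\]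
   Context: For a finite set $I$, an ordered partition of $I$ is a finite sequence $P=(I_1,\dots,I_k)$ of nonempty pairwise disjoint subsets with union $I$ (the empty set has exactly one ordered partition, the empty sequence); $\mathcal{P}_{ord}(I)$ is the set of them and $|P|=k$. $\mathcal{D}(I)$ is the set of pairs $(I_1,I_2)$ of disjoint, possibly empty, subsets with $I_1\cup I_2=I$. For $J\subset I$ and $P\in\mathcal{P}_{ord}(I)$, $P\cap J$ is the ordered partition of $J$ obtained by intersecting each $I_i$ with $J$ and deleting empty intersections. For $\lambda\in\mathbb{R}^I$ and $J\subset I$, $s_J(\lambda)=\sum_{i\in J}\lambda_i$. A vector $\mu=(\mu_1,\dots,\mu_k)\in\mathbb{R}^k$ satisfies $\mu>0$ if $\mu_1+\dots+\mu_i>0$ for all $i\in\{1,\dots,k\}$. $\mathcal{P}_{ord}(\lambda)=\{P=(I_1,\dots,I_k)\in\mathcal{P}_{ord}(I):(s_{I_1}(\lambda),\dots,s_{I_k}(\lambda))>0\}$. *)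

(* Defs.v *)
From HB Require Import structures.
From mathcomp Require Import all_boot all_order all_algebra.
From mathcomp Require Import reals.
Set Implicit Arguments. Unset Strict Implicit. Unset Printing Implicit Defensive.
Import Order.TTheory GRing.Theory Num.Theory.
Local Open Scope ring_scope.

Section OrdPart.
Variable T : finType.

Definition is_opart (A : {set T}) (P : seq {set T}) : bool :=
  [&& all (fun B => B != set0) P,
      pairwise (fun B C : {set T} => [disjoint B & C]) P &
      \bigcup_(B <- P) B == A].

Definition opart_restr (P : seq {set T}) (J : {set T}) : seq {set T} :=
  [seq B <- [seq B :&: J | B <- P] | B != set0].

Definition initial_union (P : seq {set T}) (J : {set T}) : Prop :=
  exists2 k : nat, (0 < k <= size P)%N & J = \bigcup_(B <- take k P) B.

Variable Re : realType.

Definition sJ (lam : T -> Re) (J : {set T}) : Re := \sum_(i in J) lam i.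

Definition opart_pos (lam : T -> Re) (P : seq {set T}) : bool :=
  [forall i : 'I_(size P), 0 < \sum_(B <- take i.+1 P) sJ lam B].

Definition in_Pord (lam : T -> Re) (A : {set T}) (P : seq {set T}) : bool :=
  is_opart A P && opart_pos lam P.

(* Sum over all P in P_ord(lam|_A).  Every ordered partition of a subset of T
   has length <= #|T|, so enumerating tuples of each length k <= #|T|
   lists every ordered partition exactly once. *)
Definition sum_Pord (R : nmodType) (lam : T -> Re) (A : {set T})
    (F : seq {set T} -> R) : R :=
  \sum_(k < #|T|.+1) \sum_(t : k.-tuple {set T} | in_Pord lam A t) F t.

End OrdPart.

(* Main.v *)
Require Import Defs.
From HB Require Import structures.
From mathcomp Require Import all_boot all_order all_algebra.
From mathcomp Require Import reals.
From mathcomp Require Import zify ring lra.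
Set Implicit Arguments. Unset Strict Implicit. Unset Printing Implicit Defensive.
Import Order.TTheory GRing.Theory Num.Theory.
Local Open Scope ring_scope.

Ltac bsolve := repeat match goal with |- context [ in_mem ?a ?M ] => case: (in_mem a M) end;
  rewrite /= ?implyTb ?implyFb ?implybT; try by [];
  repeat (let H := fresh in move=> H; try (by have := H isT)).

Section Comb.
Variable T : finType.
Implicit Types (A B x y : {set T}) (p P Q S : seq {set T}).

Lemma disjointP A B :
  reflect (forall i, i \in A -> i \in B -> False) [disjoint A & B].
Proof.
rewrite -setI_eq0; apply: (iffP eqP) => H.
  by move=> i iA iB; have := in_set0 i; rewrite -H inE iA iB.
by apply/setP => i; rewrite !inE; apply/negbTE/negP => /andP[]; apply: H.
Qed.

Lemma disj_all x p :
  all (fun C : {set T} => [disjoint x & C]) p = [disjoint x & \bigcup_(C <- p) C].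
Proof.
elim: p => [|C p IH]; first by rewrite big_nil /=; apply/esym/disjointP => i; rewrite inE.
rewrite big_cons /= IH.
apply/andP/idP.
  move=> [/disjointP H1 /disjointP H2]; apply/disjointP => i Hi.
  by rewrite inE => /orP[]; [apply: H1|apply: H2].
move=> /disjointP H; split; apply/disjointP => i Hi Hi'; apply: (H i Hi);
  by rewrite inE Hi' ?orbT.
Qed.

Lemma opart_nil A : is_opart A [::] = (A == set0).
Proof. by rewrite /is_opart /= big_nil eq_sym. Qed.

Lemma opart_cons A x p :
  is_opart A (x :: p) = [&& x != set0, x \subset A & is_opart (A :\: x) p].
Proof.
rewrite /is_opart /= big_cons disj_all. idtac.
set U := \bigcup_(C <- p) C.
case: (x != set0); rewrite ?andbF //=.
case: (all _ p); rewrite ?andbF //=.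
case: (pairwise _ p); rewrite ?andbF ?andbT //=.
apply/andP/andP.
  move=> [/disjointP H /eqP <-]; split; first by rewrite subsetUl.
  apply/eqP/setP => i; rewrite !inE.
  case Hx: (i \in x) => /=; last by [].
  by case Hu: (i \in U) => //; have := H i Hx Hu.
move=> [xA /eqP ->]; split.
  by apply/disjointP => i Hi; rewrite inE Hi.
by apply/eqP/setP => i; rewrite !inE; case Hx: (i \in x) => //=; move/subsetP: xA => /(_ i Hx).
Qed.





Lemma test (A B C : {set T}) : A \subset B -> A :&: C = set0 -> A :|: (B :\: A) = B.
Proof.
move=> /subsetP H1 /setP H2; apply/setP => i; move: (H1 i) (H2 i); rewrite !inE. bsolve.
Qed.

Lemma restr_cons x p J : opart_restr (x :: p) J =
  if x :&: J != set0 then (x :&: J) :: opart_restr p J else opart_restr p J.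
Proof. by []. Qed.

Lemma restr_set0 p : opart_restr p set0 = [::].
Proof. by elim: p => [|x p IH] //; rewrite restr_cons setI0 eqxx. Qed.

Lemma restr_setT p : all (fun C => C != set0) p -> opart_restr p setT = p.
Proof. by elim: p => [|x p IH] //= /andP[x0 /IH]; rewrite restr_cons setIT x0 => ->. Qed.

Lemma restr_eq p (D A A' : {set T}) : (forall C, C \in p -> C \subset D) ->
  A :&: D = A' :&: D -> opart_restr p A = opart_restr p A'.
Proof.
move=> HD HA; elim: p HD => [|x p IH] HD //.
rewrite !restr_cons IH; last by move=> C HC; apply: HD; rewrite inE HC orbT.
have xD : x \subset D by apply: HD; rewrite inE eqxx.
suff -> : x :&: A = x :&: A' by [].
move/subsetP: xD => H1; move/setP: HA => H2.
apply/setP => i; move: (H1 i) (H2 i); rewrite !inE; bsolve.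
Qed.

Lemma opart_sub A p C : is_opart A p -> C \in p -> C \subset A.
Proof.
elim: p A => [|x p IH] A //; rewrite opart_cons inE => /and3P[_ xA Hp] /orP[/eqP->//|Cp].
by apply: subset_trans (IH _ Hp Cp) _; apply: subsetDl.
Qed.

Lemma opart_ne A p : is_opart A p -> all (fun C => C != set0) p.
Proof. by case/and3P. Qed.

Lemma restr_self A p : is_opart A p -> opart_restr p A = p.
Proof.
move=> H; rewrite (@restr_eq p A A setT); first exact: restr_setT (opart_ne H).
  by move=> C; apply: opart_sub H.
by rewrite setIid setTI.
Qed.

Lemma restr_disj A B p : is_opart A p -> A :&: B = set0 -> opart_restr p B = [::].
Proof.
move=> H HB; rewrite (@restr_eq p A B set0); first exact: restr_set0.
  by move=> C; apply: opart_sub H.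
by rewrite setIC HB set0I.
Qed.


Fixpoint qsh (Q S : seq {set T}) {struct Q} : seq (seq {set T}) :=
  match Q with
  | [::] => [:: S]
  | q :: Q' =>
    let fix qs (S : seq {set T}) :=
      match S with
      | [::] => [:: q :: Q']
      | s :: S' => [seq q :: r | r <- qsh Q' (s :: S')] ++
                   [seq s :: r | r <- qs S'] ++
                   [seq (q :|: s) :: r | r <- qsh Q' S']
      end in qs S
  end.

Lemma qsh_nill S : qsh [::] S = [:: S].
Proof. by []. Qed.

Lemma qsh_nilr Q : qsh Q [::] = [:: Q].
Proof. by case: Q. Qed.

Lemma qsh_cons q Q s S : qsh (q :: Q) (s :: S) =
  [seq q :: r | r <- qsh Q (s :: S)] ++ [seq s :: r | r <- qsh (q :: Q) S] ++
  [seq (q :|: s) :: r | r <- qsh Q S].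
Proof. by []. Qed.

Lemma qsh_sound Q A S B P : A :&: B = set0 -> is_opart A Q -> is_opart B S ->
  P \in qsh Q S ->
  [/\ is_opart (A :|: B) P, opart_restr P A = Q & opart_restr P B = S].
Proof.
elim: Q A S B P => [|q Q IHQ] A.
  move=> S B P _; rewrite opart_nil => /eqP -> HS; rewrite qsh_nill inE => /eqP ->.
  by rewrite set0U restr_set0 (restr_self HS).
elim=> [|s S IHS] B P AB HQ HS.
  move: HS; rewrite opart_nil qsh_nilr inE => /eqP -> /eqP ->.
  by rewrite setU0 restr_set0 (restr_self HQ).
move: (HQ) (HS); rewrite !opart_cons => /and3P[q0 qA HQ'] /and3P[s0 sB HS'].
move/subsetP: qA => qA; move/subsetP: sB => sB; move/setP: AB => AB'.
rewrite qsh_cons !mem_cat => /orP[|/orP[]] /mapP[r Hr ->].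
- have AB2 : (A :\: q) :&: B = set0.
    by apply/setP => i; move: (AB' i); rewrite !inE; bsolve.
  have [Hr1 Hr2 Hr3] := IHQ _ _ _ _ AB2 HQ' HS Hr.
  have E : (A :|: B) :\: q = (A :\: q) :|: B.
    by apply/setP => i; move: (AB' i) (qA i); rewrite !inE; bsolve.
  have qAe : q :&: A = q.
    by apply/setP => i; move: (AB' i) (qA i); rewrite !inE; bsolve.
  have qBe : q :&: B = set0.
    by apply/setP => i; move: (AB' i) (qA i); rewrite !inE; bsolve.
  split.
  + rewrite opart_cons q0 E Hr1 andbT /=; apply/subsetP => i /qA; rewrite inE => ->.
    by [].
  + rewrite restr_cons qAe q0 -Hr2; congr (_ :: _).
    apply: (restr_eq (D := (A :\: q) :|: B)); first by move=> C; apply: opart_sub Hr1.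
    by apply/setP => i; move: (AB' i) (qA i); rewrite !inE; bsolve.
  + by rewrite restr_cons qBe eqxx.
- have AB2 : A :&: (B :\: s) = set0.
    by apply/setP => i; move: (AB' i); rewrite !inE; bsolve.
  have [Hr1 Hr2 Hr3] := IHS _ _ AB2 HQ HS' Hr.
  have E : (A :|: B) :\: s = A :|: (B :\: s).
    by apply/setP => i; move: (AB' i) (sB i); rewrite !inE; bsolve.
  have sBe : s :&: B = s.
    by apply/setP => i; move: (AB' i) (sB i); rewrite !inE; bsolve.
  have sAe : s :&: A = set0.
    by apply/setP => i; move: (AB' i) (sB i); rewrite !inE; bsolve.
  split.
  + rewrite opart_cons s0 E Hr1 andbT /=; apply/subsetP => i /sB; rewrite inE => ->.
    by rewrite orbT.
  + by rewrite restr_cons sAe eqxx.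
  + rewrite restr_cons sBe s0 -Hr3; congr (_ :: _).
    apply: (restr_eq (D := A :|: (B :\: s))); first by move=> C; apply: opart_sub Hr1.
    by apply/setP => i; move: (AB' i) (sB i); rewrite !inE; bsolve.
- have AB2 : (A :\: q) :&: (B :\: s) = set0.
    by apply/setP => i; move: (AB' i); rewrite !inE; bsolve.
  have [Hr1 Hr2 Hr3] := IHQ _ _ _ _ AB2 HQ' HS' Hr.
  have E : (A :|: B) :\: (q :|: s) = (A :\: q) :|: (B :\: s).
    by apply/setP => i; move: (AB' i) (qA i) (sB i); rewrite !inE; bsolve.
  have qAe : (q :|: s) :&: A = q.
    by apply/setP => i; move: (AB' i) (qA i) (sB i); rewrite !inE; bsolve.
  have qBe : (q :|: s) :&: B = s.
    by apply/setP => i; move: (AB' i) (qA i) (sB i); rewrite !inE; bsolve.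
  have qs0 : q :|: s != set0.
    apply: contra q0 => /eqP H; apply/eqP/setP => i; move/setP: H => /(_ i).
    by rewrite !inE; bsolve.
  split.
  + rewrite opart_cons qs0 E Hr1 andbT /=; apply/subsetP => i.
    by move: (qA i) (sB i); rewrite !inE; bsolve.
  + rewrite restr_cons qAe q0 -Hr2; congr (_ :: _).
    apply: (restr_eq (D := (A :\: q) :|: (B :\: s))); first by move=> C; apply: opart_sub Hr1.
    by apply/setP => i; move: (AB' i) (qA i) (sB i); rewrite !inE; bsolve.
  + rewrite restr_cons qBe s0 -Hr3; congr (_ :: _).
    apply: (restr_eq (D := (A :\: q) :|: (B :\: s))); first by move=> C; apply: opart_sub Hr1.
    by apply/setP => i; move: (AB' i) (qA i) (sB i); rewrite !inE; bsolve.
Qed.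


Lemma qsh_complete P A B Q S : A :&: B = set0 -> is_opart A Q -> is_opart B S ->
  is_opart (A :|: B) P -> opart_restr P A = Q -> opart_restr P B = S ->
  P \in qsh Q S.
Proof.
elim: P A B Q S => [|x P IH] A B Q S AB HQ HS.
  by move=> _ <- <-; rewrite qsh_nill inE.
rewrite opart_cons => /and3P[x0 xAB HP].
move/subsetP: xAB => xAB; move/setP: AB => AB'.
rewrite !restr_cons.
case: ifP => HxA; case: ifP => HxB.
-
  move=> EQ ES; rewrite -EQ in HQ; rewrite -ES in HS.
  move: HQ HS; rewrite !opart_cons => /and3P[_ _ HQ'] /and3P[_ _ HS'].
  have AB2 : (A :\: (x :&: A)) :&: (B :\: (x :&: B)) = set0.
    by apply/setP => i; move: (AB' i); rewrite !inE; bsolve.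
  have E : (A :|: B) :\: x = (A :\: (x :&: A)) :|: (B :\: (x :&: B)).
    by apply/setP => i; move: (AB' i) (xAB i); rewrite !inE; bsolve.
  rewrite E in HP.
  have Hr := IH _ _ _ _ AB2 HQ' HS' HP.
  have Hx : x = (x :&: A) :|: (x :&: B).
    by apply/setP => i; move: (AB' i) (xAB i); rewrite !inE; bsolve.
  rewrite -EQ -ES qsh_cons !mem_cat; apply/orP; right; apply/orP; right.
  rewrite {1}Hx; apply: map_f; apply: Hr.
    apply: (restr_eq (D := (A :\: (x :&: A)) :|: (B :\: (x :&: B))));
      first by move=> C; apply: opart_sub HP.
    by apply/setP => i; move: (AB' i) (xAB i); rewrite !inE; bsolve.
  apply: (restr_eq (D := (A :\: (x :&: A)) :|: (B :\: (x :&: B))));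
    first by move=> C; apply: opart_sub HP.
  by apply/setP => i; move: (AB' i) (xAB i); rewrite !inE; bsolve.
-
  move/negbT: HxB; rewrite negbK => /eqP HxB; move/setP: HxB => HxB.
  have xAe : x :&: A = x.
    by apply/setP => i; move: (AB' i) (xAB i) (HxB i); rewrite !inE; bsolve.
  rewrite xAe => EQ ES; rewrite -EQ in HQ.
  move: HQ; rewrite !opart_cons => /and3P[_ _ HQ'].
  have AB2 : (A :\: x) :&: B = set0.
    by apply/setP => i; move: (AB' i); rewrite !inE; bsolve.
  have E : (A :|: B) :\: x = (A :\: x) :|: B.
    by apply/setP => i; move: (AB' i) (xAB i) (HxB i); rewrite !inE; bsolve.
  rewrite E in HP.
  have Hr := IH _ _ _ _ AB2 HQ' HS HP.
  have {}Hr : P \in qsh (opart_restr P A) S.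
    apply: Hr => //.
    apply: (restr_eq (D := (A :\: x) :|: B)); first by move=> C; apply: opart_sub HP.
    by apply/setP => i; move: (AB' i) (xAB i) (HxB i); rewrite !inE; bsolve.
  rewrite -EQ; case: S {HS ES} Hr => [|s S] Hr.
    by move: Hr; rewrite !qsh_nilr !inE => /eqP {1}->.
  by rewrite qsh_cons mem_cat map_f.
-
  move/negbT: HxA; rewrite negbK => /eqP HxA; move/setP: HxA => HxA.
  have xBe : x :&: B = x.
    by apply/setP => i; move: (AB' i) (xAB i) (HxA i); rewrite !inE; bsolve.
  rewrite xBe => EQ ES; rewrite -ES in HS.
  move: HS; rewrite !opart_cons => /and3P[_ _ HS'].
  have AB2 : A :&: (B :\: x) = set0.
    by apply/setP => i; move: (AB' i); rewrite !inE; bsolve.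
  have E : (A :|: B) :\: x = A :|: (B :\: x).
    by apply/setP => i; move: (AB' i) (xAB i) (HxA i); rewrite !inE; bsolve.
  rewrite E in HP.
  have Hr := IH _ _ _ _ AB2 HQ HS' HP.
  have {}Hr : P \in qsh Q (opart_restr P B).
    apply: Hr => //.
    apply: (restr_eq (D := A :|: (B :\: x))); first by move=> C; apply: opart_sub HP.
    by apply/setP => i; move: (AB' i) (xAB i) (HxA i); rewrite !inE; bsolve.
  rewrite -ES; case: Q {HQ EQ} Hr => [|q Q] Hr.
    by move: Hr; rewrite !qsh_nill !inE => /eqP {1}->.
  by rewrite qsh_cons !mem_cat map_f ?orbT.
-
  move/negbT: HxA; rewrite negbK => /eqP HxA; move/setP: HxA => HxA.
  move/negbT: HxB; rewrite negbK => /eqP HxB; move/setP: HxB => HxB.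
  case/eqP: x0; apply/setP => i.
  by move: (AB' i) (xAB i) (HxA i) (HxB i); rewrite !inE; bsolve.
Qed.


Lemma qsh_spec P A B Q S : A :&: B = set0 -> is_opart A Q -> is_opart B S ->
  [&& is_opart (A :|: B) P, opart_restr P A == Q & opart_restr P B == S] =
  (P \in qsh Q S).
Proof.
move=> AB HQ HS; apply/idP/idP.
  by case/and3P => H1 /eqP H2 /eqP H3; apply: qsh_complete H1 H2 H3.
by move=> H; have [-> -> ->] := qsh_sound AB HQ HS H; rewrite !eqxx.
Qed.

Lemma nohas (a b : {set T}) (l l' : seq (seq {set T})) : a != b ->
  ~~ has (mem [seq a :: r | r <- l]) [seq b :: r | r <- l'].
Proof.
move=> ab; apply/hasPn => _ /mapP[r _ ->]; apply/mapP => [[r' _ [E _]]].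
by rewrite E eqxx in ab.
Qed.

Lemma uniq_mapcons (a : {set T}) (l : seq (seq {set T})) :
  uniq [seq a :: r | r <- l] = uniq l.
Proof. by apply: map_inj_uniq => r r' []. Qed.

Lemma qsh_uniq Q A S B : A :&: B = set0 -> is_opart A Q -> is_opart B S ->
  uniq (qsh Q S).
Proof.
elim: Q A S B => [|q Q IHQ] A; first by [].
elim=> [|s S IHS] B AB HQ HS; first by [].
move: (HQ) (HS); rewrite !opart_cons => /and3P[q0 qA HQ'] /and3P[s0 sB HS'].
move/subsetP: qA => qA; move/subsetP: sB => sB; move/setP: AB => AB'.
have AB1 : (A :\: q) :&: B = set0.
  by apply/setP => i; move: (AB' i); rewrite !inE; bsolve.
have AB2 : A :&: (B :\: s) = set0.
  by apply/setP => i; move: (AB' i); rewrite !inE; bsolve.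
have AB3 : (A :\: q) :&: (B :\: s) = set0.
  by apply/setP => i; move: (AB' i); rewrite !inE; bsolve.
have qs : q != s.
  apply: contra q0 => /eqP E; apply/eqP/setP => i; move: (AB' i) (qA i) (sB i).
  by rewrite E !inE; bsolve.
have qqs : q != q :|: s.
  apply: contra s0 => /eqP E; apply/eqP/setP => i; move/setP: E => /(_ i).
  move: (AB' i) (qA i) (sB i); rewrite !inE; bsolve.
have sqs : s != q :|: s.
  apply: contra q0 => /eqP E; apply/eqP/setP => i; move/setP: E => /(_ i).
  move: (AB' i) (qA i) (sB i); rewrite !inE; bsolve.
rewrite qsh_cons !cat_uniq !uniq_mapcons has_cat negb_or.
rewrite (IHQ _ _ _ AB1 HQ' HS) (IHS _ AB2 HQ HS') (IHQ _ _ _ AB3 HQ' HS') /=.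
rewrite andbT; apply/andP; split; [apply/andP; split|]; by apply: nohas.
Qed.

Lemma pairwise_rev_sym (r : rel {set T}) p : symmetric r ->
  pairwise r (rev p) = pairwise r p.
Proof.
move=> rs; elim: p => [|x p IH] //.
rewrite rev_cons -cats1 pairwise_cat IH pairwise_cons /= andbT.
congr (_ && _); rewrite /allrel all_rev; apply: eq_all => y /=.
by rewrite andbT rs.
Qed.

Lemma opart_rev A p : is_opart A (rev p) = is_opart A p.
Proof.
rewrite /is_opart all_rev pairwise_rev_sym ?big_rev //.
by move=> B C; rewrite disjoint_sym.
Qed.

Lemma restr_rev p J : opart_restr (rev p) J = rev (opart_restr p J).
Proof. by rewrite /opart_restr map_rev filter_rev. Qed.

Lemma opart_size A p : is_opart A p -> (size p <= #|A|)%N.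
Proof.
elim: p A => [|x p IH] A //; rewrite opart_cons => /and3P[x0 xA /IH].
rewrite cardsD (setIidPr xA) /=.
have : (0 < #|x|)%N by rewrite card_gt0.
have : (#|x| <= #|A|)%N by apply: subset_leq_card.
move=> h1 h2 h3 /=; lia.
Qed.

End Comb.

Section Sums.
Variable T : finType.
Variable Re : realType.
Variable lam : T -> Re.
Variable R : comPzRingType.
Implicit Types (A B x y : {set T}) (p P Q S : seq {set T}).

Lemma sJ_U A B : A :&: B = set0 -> sJ lam (A :|: B) = sJ lam A + sJ lam B.
Proof.
move/setP=> AB; rewrite /sJ (big_setID A) /=.
have -> : (A :|: B) :&: A = A.
  by apply/setP => i; move: (AB i); rewrite !inE; bsolve.
have -> : (A :|: B) :\: A = B.
  by apply/setP => i; move: (AB i); rewrite !inE; bsolve.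
by [].
Qed.

Lemma weight A p : is_opart A p -> \sum_(C <- p) sJ lam C = sJ lam A.
Proof.
elim: p A => [|x p IH] A.
  by rewrite opart_nil => /eqP ->; rewrite big_nil /sJ big_set0.
rewrite opart_cons => /and3P[_ /subsetP xA /IH]; rewrite big_cons => ->.
have -> : A = x :|: (A :\: x).
  by apply/setP => i; move: (xA i); rewrite !inE; bsolve.
rewrite sJ_U; last by apply/setP => i; rewrite !inE; bsolve.
have -> : (x :|: (A :\: x)) :\: x = A :\: x.
  by apply/setP => i; rewrite !inE; bsolve.
by [].
Qed.

Lemma pos_rcons p x : opart_pos lam (rcons p x) =
  (0 < \sum_(C <- rcons p x) sJ lam C) && opart_pos lam p.
Proof.
have E : forall k, (k <= size p)%N -> take k (rcons p x) = take k p.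
  by move=> k hk; rewrite -cats1 takel_cat.
rewrite /opart_pos; apply/forallP/andP.
  move=> H; split.
    have Hn : (size p < size (rcons p x))%N by rewrite size_rcons.
    by have := H (Ordinal Hn); rewrite /= take_oversize ?size_rcons.
  apply/forallP => i.
  have Hn : (i < size (rcons p x))%N by rewrite size_rcons ltnS ltnW.
  by have := H (Ordinal Hn); rewrite /= E.
move=> [H1 /forallP H2] i.
case: (ltnP i (size p)) => Hi.
  by rewrite E //; exact: (H2 (Ordinal Hi)).
rewrite take_oversize //; have := size_rcons p x; lia.
Qed.

Definition posr r := opart_pos lam (rev r).

Lemma posr_nil : posr [::].
Proof. by apply/forallP => [[]]. Qed.

Lemma posr_cons x r :
  posr (x :: r) = (0 < \sum_(C <- x :: r) sJ lam C) && posr r.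
Proof.
rewrite /posr rev_cons pos_rcons; congr (andb (_ < _) _).
by rewrite (perm_big _ (permEl (perm_rcons x (rev r)))) !big_cons big_rev.
Qed.

Definition gs r : R := if posr r then (-1) ^+ size r else 0.

Lemma gs_cons A q Q : is_opart A (q :: Q) ->
  gs (q :: Q) = if 0 < sJ lam A then - gs Q else 0.
Proof.
move=> H; rewrite /gs posr_cons (weight H).
by case: (0 < sJ lam A) => //=; case: (posr Q); rewrite ?exprS ?mulN1r ?oppr0.
Qed.

Lemma sum_head (c : {set T}) (l : seq (seq {set T})) (W : Re) :
  (forall r, r \in l -> \sum_(C <- c :: r) sJ lam C = W) ->
  \sum_(r <- l | posr (c :: r)) (-1 : R) ^+ size (c :: r) =
  if 0 < W then - \sum_(r <- l | posr r) (-1) ^+ size r else 0.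
Proof.
move=> H; rewrite big_seq_cond [in RHS]big_seq_cond.
case: ifP => HW.
  rewrite -sumrN; apply: eq_big => [r|r _].
    by case Hr: (r \in l); rewrite //= posr_cons H // HW.
  by rewrite /= exprS mulN1r.
by apply: big1 => r /andP[Hr]; rewrite posr_cons H // HW.
Qed.


Lemma qsh_sum Q A S B : A :&: B = set0 -> is_opart A Q -> is_opart B S ->
  \sum_(r <- qsh Q S | posr r) (-1 : R) ^+ size r = gs Q * gs S.
Proof.
elim: Q A S B => [|q Q IHQ] A.
  move=> S B _ _ _; rewrite qsh_nill big_cons big_nil /gs posr_nil /= mul1r.
  by case: (posr S); rewrite ?addr0.
elim=> [|s S IHS] B AB HQ HS.
  rewrite qsh_nilr big_cons big_nil /gs posr_nil /= mulr1.
  by case: (posr (q :: Q)); rewrite ?addr0.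
move: (HQ) (HS); rewrite !opart_cons => /and3P[q0 qA HQ'] /and3P[s0 sB HS'].
move/subsetP: (qA) => qA'; move/subsetP: (sB) => sB'; move/setP: (AB) => AB'.
have AB1 : (A :\: q) :&: B = set0.
  by apply/setP => i; move: (AB' i); rewrite !inE; bsolve.
have AB2 : A :&: (B :\: s) = set0.
  by apply/setP => i; move: (AB' i); rewrite !inE; bsolve.
have AB3 : (A :\: q) :&: (B :\: s) = set0.
  by apply/setP => i; move: (AB' i); rewrite !inE; bsolve.
have Hw : forall r, r \in qsh (q :: Q) (s :: S) ->
    \sum_(C <- r) sJ lam C = sJ lam (A :|: B).
  by move=> r Hr; have [H1 _ _] := qsh_sound AB HQ HS Hr; apply: weight.
rewrite qsh_cons !big_cat !big_map.
rewrite (sum_head (W := sJ lam (A :|: B))); last first.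
  by move=> r Hr; apply: Hw; rewrite qsh_cons !mem_cat map_f.
rewrite (sum_head (W := sJ lam (A :|: B))); last first.
  by move=> r Hr; apply: Hw; rewrite qsh_cons !mem_cat map_f ?orbT.
rewrite (sum_head (W := sJ lam (A :|: B))); last first.
  by move=> r Hr; apply: Hw; rewrite qsh_cons !mem_cat map_f ?orbT.
rewrite (IHQ _ _ _ AB1 HQ' HS) (IHS _ AB2 HQ HS') (IHQ _ _ _ AB3 HQ' HS').
rewrite (gs_cons HQ) (gs_cons HS) sJ_U //.
set a := sJ lam A; set b := sJ lam B; set gQ := gs Q; set gS := gs S.
case Ha: (0 < a); case Hb: (0 < b); case Hab: (0 < a + b);
  rewrite /= ?mulr0 ?mul0r ?oppr0 ?addr0 ?add0r //.
all: try ring.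
  by rewrite addr_gt0 in Hab.
have Ha' : a <= 0 by rewrite leNgt Ha.
have Hb' : b <= 0 by rewrite leNgt Hb.
by exfalso; move/idP: Hab; lra.
Qed.

End Sums.

Section Main.
Variable T : finType.
Implicit Types (A B x y : {set T}) (p P Q S : seq {set T}).

Lemma restr_opart D A P : is_opart D P -> A \subset D -> is_opart A (opart_restr P A).
Proof.
elim: P D A => [|x P IH] D A.
  by rewrite !opart_nil => /eqP -> /subsetP H; apply/eqP/setP => i; move: (H i); rewrite !inE; bsolve.
rewrite opart_cons => /and3P[x0 /subsetP xD HP] /subsetP AD.
have E : opart_restr P A = opart_restr P (A :\: x).
  apply: (restr_eq (D := D :\: x)); first by move=> C; apply: opart_sub HP.
  by apply/setP => i; rewrite !inE; bsolve.
have H' : A :\: x \subset D :\: x.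
  by apply/subsetP => i; move: (AD i); rewrite !inE; bsolve.
rewrite restr_cons E; case: ifP => HxA.
  rewrite opart_cons HxA subsetIr /=.
  have -> : A :\: (x :&: A) = A :\: x by apply/setP => i; rewrite !inE; bsolve.
  exact: IH HP H'.
move/negbT: HxA; rewrite negbK => /eqP/setP HxA.
have E2 : A :\: x = A.
  by apply/setP => i; move: (HxA i); rewrite !inE; bsolve.
rewrite -{1}E2; exact: IH HP H'.
Qed.

Definition allseqs (N : nat) : seq (seq {set T}) :=
  flatten [seq [seq tval t | t <- index_enum (k.-tuple {set T})] | k <- iota 0 N.+1].

Lemma mem_allseqs N P : (P \in allseqs N) = (size P <= N)%N.
Proof.
apply/flatten_mapP/idP.
  move=> [k]; rewrite mem_iota add0n ltnS => Hk /mapP[t _ ->].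
  by rewrite size_tuple.
move=> HP; exists (size P); first by rewrite mem_iota add0n ltnS.
apply/mapP; exists (@Tuple (size P) _ P (eqxx _)) => //.
by rewrite mem_index_enum.
Qed.

Lemma uniq_flat (s : seq nat) (f : nat -> seq (seq {set T})) : uniq s ->
  (forall k, uniq (f k)) -> (forall k P, P \in f k -> size P = k) ->
  uniq (flatten (map f s)).
Proof.
move=> + Hu Hs; elim: s => [|k s IH] //= /andP[ks us].
rewrite cat_uniq Hu IH // andbT; apply/hasPn => P /flatten_mapP[k' k's Pk'].
apply/negP => Pk; move: ks; rewrite -(Hs _ _ Pk) (Hs _ _ Pk') k's.
by [].
Qed.

Lemma uniq_allseqs N : uniq (allseqs N).
Proof.
apply: uniq_flat; first exact: iota_uniq.
  move=> k; rewrite map_inj_uniq ?index_enum_uniq //; exact: val_inj.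
by move=> k P /mapP[t _ ->]; rewrite size_tuple.
Qed.

Lemma sum_Pord_L (Re : realType) (M : nmodType) (lam : T -> Re) A (F : seq {set T} -> M) :
  sum_Pord lam A F = \sum_(P <- allseqs #|T| | in_Pord lam A P) F P.
Proof.
rewrite /sum_Pord /allseqs big_flatten big_map /=.
rewrite -(big_mkord xpredT (fun k => \sum_(t : k.-tuple {set T} | in_Pord lam A t) F t)).
rewrite /index_iota subn0; apply: eq_bigr => k _.
by rewrite big_map.
Qed.


Lemma pick_sum (M : nmodType) (X : eqType) (r : seq X) (p : pred X) i (F : X -> M) :
  uniq r -> i \in r -> p i -> (forall j, j != i -> F j = 0) ->
  \sum_(j <- r | p j) F j = F i.
Proof.
move=> Hu Hi Hp H0.
rewrite (perm_big _ (perm_to_rem Hi)) /= big_cons Hp big1_seq ?addr0 //.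
move=> j /andP[_ Hj]; apply: H0; move: Hj; rewrite (mem_rem_uniq i Hu) inE.
by case/andP.
Qed.

Lemma regroup (M : nmodType) (L : seq (seq {set T})) (pP pQ pS : pred (seq {set T}))
    (f g : seq {set T} -> seq {set T}) (G : seq {set T} -> M) :
  uniq L ->
  (forall P, P \in L -> pP P -> [/\ pQ (f P), pS (g P), f P \in L & g P \in L]) ->
  \sum_(P <- L | pP P) G P =
  \sum_(Q <- L | pQ Q) \sum_(S <- L | pS S) \sum_(P <- L | pP P)
     (if (f P == Q) && (g P == S) then G P else 0).
Proof.
move=> Hu H.
transitivity (\sum_(Q <- L | pQ Q) \sum_(P <- L | pP P) \sum_(S <- L | pS S)
     (if (f P == Q) && (g P == S) then G P else 0)); last first.
  by apply: eq_bigr => Q _; exact: exchange_big.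
rewrite exchange_big /= big_seq_cond [in RHS]big_seq_cond; apply: eq_bigr => P /andP[PL HP].
have [h1 h2 h3 h4] := H P PL HP.
rewrite (@pick_sum _ _ L pQ (f P)) //.
  rewrite eqxx /= (@pick_sum _ _ L pS (g P)) ?eqxx //.
  by move=> j; rewrite eq_sym => /negbTE ->.
move=> j; rewrite eq_sym => /negbTE Hj; apply: big1 => S _; by rewrite Hj.
Qed.

Lemma sum_rev (M : nmodType) N (p : pred (seq {set T})) (F : seq {set T} -> M) :
  \sum_(P <- allseqs N | p P) F P = \sum_(r <- allseqs N | p (rev r)) F (rev r).
Proof.
have Hp : perm_eq (allseqs N) (map rev (allseqs N)).
  apply: uniq_perm; first exact: uniq_allseqs.
    by rewrite map_inj_uniq ?uniq_allseqs //; exact: (can_inj revK).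
  move=> x; rewrite -{2}(revK x) (mem_map (can_inj revK)) !mem_allseqs.
  by rewrite size_rev.
by rewrite (perm_big _ Hp) big_map.
Qed.

Lemma sub_sum (M : nmodType) (L s : seq (seq {set T})) (p : pred (seq {set T}))
    (F : seq {set T} -> M) :
  uniq L -> uniq s -> {subset s <= L} ->
  \sum_(x <- L | (x \in s) && p x) F x = \sum_(x <- s | p x) F x.
Proof.
move=> uL us sL; rewrite -big_filter_cond; apply: perm_big.
apply: uniq_perm; first exact: filter_uniq.
  exact: us.
by move=> x; rewrite mem_filter; case Hx: (x \in s) => //=; rewrite sL.
Qed.

Lemma key (Re : realType) (lam : T -> Re) (R : comPzRingType) (Ip Im : {set T}) Q S :
  Ip :&: Im = set0 -> Ip :|: Im = setT -> is_opart Ip Q -> is_opart Im S ->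
  \sum_(P <- allseqs #|T| | in_Pord lam setT P)
    (if (opart_restr P Ip == Q) && (opart_restr P Im == S) then (-1 : R) ^+ size P else 0)
  = gs lam R (rev Q) * gs lam R (rev S).
Proof.
move=> HD HU HQ HS.
rewrite -big_mkcondr sum_rev.
have HQ' : is_opart Ip (rev Q) by rewrite opart_rev.
have HS' : is_opart Im (rev S) by rewrite opart_rev.
have Hsub : {subset qsh (rev Q) (rev S) <= allseqs #|T|}.
  move=> r Hr; have [H1 _ _] := qsh_sound HD HQ' HS' Hr.
  by rewrite mem_allseqs; apply: leq_trans (opart_size H1) (max_card _).
rewrite -(qsh_sum lam R HD HQ' HS').
rewrite -(sub_sum _ _ (uniq_allseqs _) (qsh_uniq HD HQ' HS') Hsub).
apply: eq_big => [r|r _]; last by rewrite size_rev.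
rewrite /in_Pord opart_rev !restr_rev -(qsh_spec r HD HQ' HS') HU.
rewrite -{1}(revK Q) -{1}(revK S) !(inj_eq (can_inj revK)).
by rewrite /posr; case: (is_opart _ r); case: (opart_pos _ _); rewrite ?andbT ?andbF.
Qed.

End Main.

Unset Implicit Arguments.

Theorem proposition7p1 (disp : Order.disp_t) (I : finOrderType disp)
  (R : comPzRingType) (Re : realType)
  (a b : {set I} -> {set I} -> {set I} -> R)
  (c d : {set I} -> seq {set I} -> R)
  (Hc : forall (I' J K : {set I}) (P : seq {set I}),
      is_opart I' P -> J :&: K = set0 -> J :|: K = I' -> initial_union P J ->
      c I' P = a I' J K * c J (opart_restr P J) * c K (opart_restr P K))
  (Hd : forall (I' J K : {set I}) (P : seq {set I}),
      is_opart I' P -> J :&: K = set0 -> J :|: K = I' -> initial_union P J ->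
      d I' P = b I' J K * d J (opart_restr P J) * d K (opart_restr P K))
  (lam : I -> Re) (Ip Im : {set I})
  (HD : Ip :&: Im = set0) (HU : Ip :|: Im = [set: I]) :
  sum_Pord lam [set: I]
    (fun P => (-1) ^+ size P * c Ip (opart_restr P Ip) * d Im (opart_restr P Im))
  = sum_Pord lam Ip (fun P => (-1) ^+ size P * c Ip P)
    * sum_Pord lam Im (fun P => (-1) ^+ size P * d Im P).
Proof.
rewrite !sum_Pord_L.
rewrite (@regroup I _ (allseqs I #|I|) (in_Pord lam setT) (is_opart Ip) (is_opart Im)
  (fun P => opart_restr P Ip) (fun P => opart_restr P Im)); last first.
- move=> P PL /andP[HP _].
  have H1 := restr_opart HP (subsetT Ip); have H2 := restr_opart HP (subsetT Im).
  split => //; rewrite mem_allseqs.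
    exact: leq_trans (opart_size H1) (max_card _).
  exact: leq_trans (opart_size H2) (max_card _).
- exact: uniq_allseqs.
rewrite /in_Pord (big_mkcondr _ _ (is_opart Ip) (opart_pos lam)).
rewrite (big_mkcondr _ _ (is_opart Im) (opart_pos lam)) big_distrl.
apply: eq_bigr => Q HQ.
rewrite big_distrr; apply: eq_bigr => S HS.
transitivity (c Ip Q * d Im S * \sum_(P <- allseqs I #|I| | is_opart setT P && opart_pos lam P)
   (if (opart_restr P Ip == Q) && (opart_restr P Im == S) then (-1 : R) ^+ size P else 0)).
  rewrite mulr_sumr; apply: eq_bigr => P _.
  case: ifP => [/andP[/eqP -> /eqP ->]|_]; last by rewrite mulr0.
  by ring.
rewrite (key lam R HD HU HQ HS).
rewrite /gs /posr !revK !size_rev.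
by case: (opart_pos lam Q); case: (opart_pos lam S); rewrite /= ?mulr0 ?mul0r //; ring.
Qed.
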